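(* Let $(p,s)$ be $(1,2)$ or $(2,1)$, let $r,t\in S$ (initial and target state), and let $\overline{f_1},\overline{f_2}$ be reals. For a state $u$ from which $t$ is reachable, let $\pi^p_u$ be a $u$-$t$ path lexicographically minimal in $(\mathit{cost}_p,\mathit{cost}_s)$ and $\pi^s_u$ a $u$-$t$ path lexicographically minimal in $(\mathit{cost}_s,\mathit{cost}_p)$, and set $h_p(u)=\mathit{cost}_p(\pi^p_u)$, $ub_s(u)=\mathit{cost}_s(\pi^p_u)$, $h_s(u)=\mathit{cost}_s(\pi^s_u)$, $ub_p(u)=\mathit{cost}_p(\pi^s_u)$. Let $P$ be a path from $r$ to $u$ with $g_q=\mathit{cost}_q(P)$, which is valid, i.e. $g_1+h_1(u)\le\overline{f_1}$ and $g_2+h_2(u)\le\overline{f_2}$, and which is terminal, i.e. $h_p(u)=ub_p(u)$. Then $P$ is a tentative solution: $g_s+ub_s(u)\le\overline{f_s}$, so that $P$ followed by $\pi^p_u$ is an $r$-$t$ path with $\mathit{cost}_p=g_p+h_p(u)\le\overline{f_p}$ and $\mathit{cost}_s\le\overline{f_s}$.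
   Context: $G=(S,E)$ is a directed graph with non-negative edge costs $\mathit{cost}_1,\mathit{cost}_2$; a path is a sequence of states with consecutive pairs in $E$, and $\mathit{cost}_q$ of a path is the sum of $\mathit{cost}_q$ over its edges. *)

(* Defs.v *)
From Stdlib Require Import Reals List.
Open Scope R_scope.

Section Graph.
Variable S : Type.

Fixpoint is_walk (E : S -> S -> Prop) (p : list S) : Prop :=
  match p with
  | x :: ((y :: _) as q) => E x y /\ is_walk E q
  | _ => True
  end.

Definition is_path (E : S -> S -> Prop) (a b : S) (p : list S) : Prop :=
  hd_error p = Some a /\ last p a = b /\ is_walk E p.

Fixpoint pcost (c : S -> S -> R) (p : list S) : R :=
  match p with
  | x :: ((y :: _) as q) => c x y + pcost c q
  | _ => 0
  end.

Definition lexmin_path (E : S -> S -> Prop) (ca cb : S -> S -> R)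
    (u t : S) (pi : list S) : Prop :=
  is_path E u t pi /\
  forall pi', is_path E u t pi' ->
    pcost ca pi < pcost ca pi' \/
    (pcost ca pi = pcost ca pi' /\ pcost cb pi <= pcost cb pi').
End Graph.

Arguments is_walk {S}.
Arguments is_path {S}.
Arguments pcost {S}.
Arguments lexmin_path {S}.

Definition sel {A : Type} (q : nat) (a1 a2 : A) : A :=
  if Nat.eqb q 1 then a1 else a2.

(* Main.v *)
Require Import Defs.
From Stdlib Require Import Reals List Lra.
Open Scope R_scope.


Lemma last_indep (S : Type) (l : list S) : forall a d d', last (a :: l) d = last (a :: l) d'.
Proof. induction l; intros; simpl; [reflexivity|]. simpl in IHl. destruct l; [reflexivity|]. apply (IHl a d d'). Qed.

Lemma last_cons2 (S : Type) (x y : S) (l : list S) d : last (x :: y :: l) d = last (y :: l) d.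
Proof. reflexivity. Qed.

Lemma app_lemma (S : Type) (E : S -> S -> Prop) (c : S -> S -> R) (u : S) (q : list S) :
  forall P x, last (x :: P) x = u -> is_walk E (x :: P) -> is_walk E (u :: q) ->
  is_walk E ((x :: P) ++ q) /\ pcost c ((x :: P) ++ q) = pcost c (x :: P) + pcost c (u :: q)
  /\ last ((x :: P) ++ q) x = last (u :: q) u.
Proof.
  induction P as [|y P IH]; intros x hl hw hq.
  - simpl in hl. subst x. simpl. split; [exact hq|]. split; [ring|].
    destruct q; reflexivity.
  - assert (hl' : last (y :: P) y = u).
    { rewrite <- hl. rewrite last_cons2. apply last_indep. }
    destruct hw as [hxy hw].
    destruct (IH y hl' hw hq) as [A [B C]].
    simpl ((x :: y :: P) ++ q). split; [split; assumption|].
    split.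
    + change (pcost c (x :: y :: (P ++ q))) with (c x y + pcost c ((y :: P) ++ q)).
      rewrite B. change (pcost c (x :: y :: P)) with (c x y + pcost c (y :: P)). ring.
    + rewrite <- C. change ((x :: y :: P) ++ q) with (x :: y :: (P ++ q)).
      rewrite last_cons2. apply last_indep.
Qed.

Lemma concat_path (S : Type) (E : S -> S -> Prop) (c : S -> S -> R) (r u t : S) P pi :
  is_path E r u P -> is_path E u t pi ->
  is_path E r t (P ++ tl pi) /\ pcost c (P ++ tl pi) = pcost c P + pcost c pi.
Proof.
  intros [h1 [h2 h3]] [k1 [k2 k3]].
  destruct P as [|x P]; [discriminate|]. destruct pi as [|y q]; [discriminate|].
  simpl in h1, k1. injection h1 as Hx. injection k1 as Hy. subst r. rewrite <- Hy in h2.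
  destruct (app_lemma S E c y q P x h2 h3 k3) as [A [B C]].
  simpl tl. split; [|exact B].
  split; [reflexivity|]. split; [|exact A].
  rewrite C, (last_indep S q y y u). exact k2.
Qed.

(* pi1 = lexmin path u->t in (cost1,cost2), pi2 = lexmin in (cost2,cost1).
   h_1(u) = cost1 pi1, ub_2(u) = cost2 pi1, h_2(u) = cost2 pi2, ub_1(u) = cost1 pi2.
   pi^p = sel p pi1 pi2, pi^s = sel s pi1 pi2. *)
Theorem lemma11 (S : Type) (E : S -> S -> Prop) (cost1 cost2 : S -> S -> R)
  (hc1 : forall x y, E x y -> 0 <= cost1 x y)
  (hc2 : forall x y, E x y -> 0 <= cost2 x y)
  (p s : nat) (hps : (p, s) = (1%nat, 2%nat) \/ (p, s) = (2%nat, 1%nat))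
  (r t u : S) (fbar1 fbar2 : R)
  (pi1 pi2 : list S)
  (hpi1 : lexmin_path E cost1 cost2 u t pi1)
  (hpi2 : lexmin_path E cost2 cost1 u t pi2)
  (P : list S) (hP : is_path E r u P)
  (hvalid1 : pcost cost1 P + pcost cost1 pi1 <= fbar1)
  (hvalid2 : pcost cost2 P + pcost cost2 pi2 <= fbar2)
  (hterm : pcost (sel p cost1 cost2) (sel p pi1 pi2)
           = pcost (sel p cost1 cost2) (sel s pi1 pi2)) :
  pcost (sel s cost1 cost2) P + pcost (sel s cost1 cost2) (sel p pi1 pi2)
    <= sel s fbar1 fbar2 /\
  is_path E r t (P ++ tl (sel p pi1 pi2)) /\
  pcost (sel p cost1 cost2) (P ++ tl (sel p pi1 pi2))
    = pcost (sel p cost1 cost2) P + pcost (sel p cost1 cost2) (sel p pi1 pi2) /\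
  pcost (sel p cost1 cost2) P + pcost (sel p cost1 cost2) (sel p pi1 pi2)
    <= sel p fbar1 fbar2 /\
  pcost (sel s cost1 cost2) (P ++ tl (sel p pi1 pi2)) <= sel s fbar1 fbar2.
Proof.
  destruct hps as [H|H]; injection H; intros; subst; unfold sel in *; simpl in *.
  - destruct hpi1 as [hp1 hm1]. destruct hpi2 as [hp2 hm2].
    destruct (concat_path S E cost1 r u t P pi1 hP hp1) as [A B].
    destruct (concat_path S E cost2 r u t P pi1 hP hp1) as [_ B2].
    assert (cost2le : pcost cost2 pi1 <= pcost cost2 pi2).
    { destruct (hm1 pi2 hp2) as [h|[_ h]]; [lra|exact h]. }
    split; [lra|]. split; [exact A|]. split; [exact B|]. split; lra.
  - destruct hpi1 as [hp1 hm1]. destruct hpi2 as [hp2 hm2].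
    destruct (concat_path S E cost2 r u t P pi2 hP hp2) as [A B].
    destruct (concat_path S E cost1 r u t P pi2 hP hp2) as [_ B2].
    assert (cost1le : pcost cost1 pi2 <= pcost cost1 pi1).
    { destruct (hm2 pi1 hp1) as [h|[_ h]]; [lra|exact h]. }
    split; [lra|]. split; [exact A|]. split; [exact B|]. split; lra.
Qed.
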